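(* Let $G$ be a connected finite simple graph with vertex set $[n]$. Then the connected subgraph arrangement $\mathcal{A}_G$ in $\mathbb{Q}^n$ is projectively unique: for every hyperplane arrangement $\mathcal{C}$ in $\mathbb{Q}^n$ whose intersection lattice $L(\mathcal{C})$ is isomorphic as a poset to $L(\mathcal{A}_G)$, there exists $\varphi\in \mathrm{GL}(\mathbb{Q}^n)$ with $\mathcal{C}=\{\varphi(H)\mid H\in\mathcal{A}_G\}$.
   Context: Let $G=(N,E)$ be a finite simple graph with vertex set $N=[n]=\{1,\dots,n\}$. For $\varnothing\neq I\subseteq N$, $G[I]$ denotes the induced subgraph on $I$, and $H_I:=\ker\big(\sum_{i\in I}x_i\big)$, where $x_1,\dots,x_n$ are the coordinate functions on $\mathbb{K}^n$ for a field $\mathbb{K}$. The connected subgraph arrangement is $\mathcal{A}_G(\mathbb{K}):=\{H_I\mid \varnothing\neq I\subseteq N,\ G[I]\text{ connected}\}$, a central hyperplane arrangement in $\mathbb{K}^n$; $\mathcal{A}_G:=\mathcal{A}_G(\mathbb{Q})$. The intersection lattice $L(\mathcal{A})$ of an arrangement is the set of all intersections of subsets of $\mathcal{A}$ (including $V$ itself), ordered by reverse inclusion. *)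

(* Defs.v *)
(* Subspaces of Q^n are represented (up to (_ == _)%MS) by
   row-space matrices 'M[rat]_n, vectors of Q^n being row vectors 'rV[rat]_n. *)
From HB Require Import structures.
From mathcomp Require Import all_boot all_order all_algebra.
Set Implicit Arguments. Unset Strict Implicit. Unset Printing Implicit Defensive.
Import Order.TTheory GRing.Theory Num.Theory.
Local Open Scope ring_scope.

Definition simple_graph (n : nat) (e : rel 'I_n) : Prop :=
  irreflexive e /\ symmetric e.

Definition induced_connected (n : nat) (e : rel 'I_n) (J : {set 'I_n}) : bool :=
  [forall i in J, forall j in J,
    connect [rel x y | [&& e x y, x \in J & y \in J]] i j].

Definition graph_connected (n : nat) (e : rel 'I_n) : bool :=
  induced_connected e [set: 'I_n].

Definition hypI (n : nat) (J : {set 'I_n}) : 'M[rat]_n :=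
  kermx (\col_(i < n) ((i \in J)%:R : rat)).

Definition is_hyperplane (n : nat) (H : 'M[rat]_n) : Prop :=
  (0 < n)%N /\ \rank H = n.-1.

Definition arrangement (n : nat) (C : seq 'M[rat]_n) : Prop :=
  forall H, H \in C -> is_hyperplane H.

Definition conn_subgraph_arr (n : nat) (e : rel 'I_n) : seq 'M[rat]_n :=
  [seq hypI J | J <- enum [set J : {set 'I_n} |
     (J != set0) && induced_connected e J ]].

Definition in_lattice (n : nat) (A : seq 'M[rat]_n) (X : 'M[rat]_n) : Prop :=
  exists s : seq 'M[rat]_n, {subset s <= A} /\
    (X == \bigcap_(H <- s) H)%MS.

(* Poset isomorphism between L(C) and L(A), both ordered by reverse
   inclusion; elements are subspaces, i.e. matrices up to (_ == _)%MS. *)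
Definition lattice_iso (n : nat) (C A : seq 'M[rat]_n) : Prop :=
  exists (f g : 'M[rat]_n -> 'M[rat]_n),
    [/\ forall X, in_lattice C X -> in_lattice A (f X),
        forall Y, in_lattice A Y -> in_lattice C (g Y),
        forall X, in_lattice C X -> (g (f X) == X)%MS,
        forall Y, in_lattice A Y -> (f (g Y) == Y)%MS &
        forall X X', in_lattice C X -> in_lattice C X' ->
          ((X' <= X)%MS <-> (f X' <= f X)%MS)].

(* C = { phi(H) | H in A } as sets of subspaces, phi acting on row vectors. *)
Definition image_arr (n : nat) (phi : 'M[rat]_n) (A C : seq 'M[rat]_n) : Prop :=
  (forall H, H \in C -> exists2 H', H' \in A & (H == H' *m phi)%MS) /\
  (forall H', H' \in A -> exists2 H, H \in C & (H == H' *m phi)%MS).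

(* Main.v *)
Require Import Defs.
From HB Require Import structures.
From mathcomp Require Import all_boot all_order all_algebra.
From mathcomp Require Import zify.
Set Implicit Arguments. Unset Strict Implicit. Unset Printing Implicit Defensive.
Import Order.TTheory GRing.Theory Num.Theory.
Local Open Scope ring_scope.

Lemma sub_bigcap_seq n m (u : 'M[rat]_(m, n)) (s : seq 'M[rat]_n) :
  (u <= \bigcap_(H <- s) H)%MS = all (fun H => u <= H)%MS s.
Proof.
elim: s => [|H s IH]; first by rewrite big_nil submx1.
by rewrite big_cons sub_capmx IH.
Qed.

Lemma submx_rv n m1 m2 (X : 'M[rat]_(m1, n)) (Y : 'M[rat]_(m2, n)) :
  (forall u : 'rV_n, (u <= X)%MS -> (u <= Y)%MS) -> (X <= Y)%MS.
Proof. by move=> H; apply/row_subP => i; apply: H; apply: row_sub. Qed.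

Lemma hyp_not_top n (H : 'M[rat]_n) : is_hyperplane H -> ~~ (1%:M <= H)%MS.
Proof.
case=> n0 rH; rewrite sub1mx /row_full rH; apply/negP => /eqP; lia.
Qed.

Lemma hyp_max n (H X : 'M[rat]_n) : is_hyperplane H -> (H <= X)%MS ->
  ~~ (1%:M <= X)%MS -> (X <= H)%MS.
Proof.
case=> n0 rH sHX; rewrite sub1mx /row_full => nf.
have := mxrank_leqif_eq sHX; rewrite rH => le.
have rX : (\rank X <= n.-1)%N.
  have := rank_leq_row X; move: nf; rewrite leq_eqVlt => /negbTE -> /=; lia.
have e: (n.-1 == \rank X)%N by rewrite eqn_leq rX le.1.
by move: e; rewrite le.2 => /andP[].
Qed.

Lemma lattice_facts n (C A : seq 'M[rat]_n) :
  arrangement C -> arrangement A -> lattice_iso C A ->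
  exists kc : 'M[rat]_n -> 'M[rat]_n,
  [/\ forall H, H \in A -> kc H \in C,
      forall K, K \in C -> exists2 H, H \in A & (K == kc H)%MS,
      forall t H0, {subset t <= A} -> H0 \in A ->
        (\bigcap_(H <- t) H <= H0)%MS -> (\bigcap_(H <- map kc t) H <= kc H0)%MS &
      forall t H0, {subset t <= A} -> H0 \in A ->
        (\bigcap_(H <- map kc t) H <= kc H0)%MS -> (\bigcap_(H <- t) H <= H0)%MS].
Proof.
move=> arC arA [f [g [fL gL gf fg mono]]].
have Lnil (s : seq 'M[rat]_n) : in_lattice s 1%:M by exists [::]; rewrite big_nil submx_refl.
have L1 (s : seq 'M[rat]_n) H : H \in s -> in_lattice s H.
  by move=> Hs; exists [:: H]; split; [move=> x; rewrite inE => /eqP-> | rewrite big_seq1 submx_refl].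
have Lcap (s t : seq 'M[rat]_n) : {subset t <= s} -> in_lattice s (\bigcap_(H <- t) H)%MS.
  by move=> ts; exists t; rewrite submx_refl.
have Lsub (s : seq 'M[rat]_n) X : in_lattice s X -> ~~ (1%:M <= X)%MS -> exists2 H, H \in s & (X <= H)%MS.
  case=> t [ts /andP[sX sX']] nt; case: t ts sX sX' => [|H t] ts sX sX'.
    by move: sX'; rewrite big_nil => sX'; case/negP: nt.
  exists H; first by apply: ts; rewrite inE eqxx.
  by apply: submx_trans sX _; rewrite big_cons capmxSl.
have ftop : (1%:M <= f 1%:M)%MS.
  have gY := gL _ (Lnil A); have /andP[_ h] := fg _ (Lnil A).
  apply: submx_trans h _; apply/(mono _ _ (Lnil C) gY); exact: submx1.
have fnt X : in_lattice C X -> ~~ (1%:M <= X)%MS -> ~~ (1%:M <= f X)%MS.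
  move=> LX nX; apply: contra nX => h; apply/(mono _ _ LX (Lnil C)).
  exact: submx_trans (submx1 _) h.
have gnt H : H \in A -> ~~ (1%:M <= g H)%MS.
  move=> HA; apply/negP => h.
  have := (mono _ _ (gL _ (L1 _ _ HA)) (Lnil C)).1 h.
  have /andP[hh _] := fg _ (L1 _ _ HA) => h2.
  have := hyp_not_top (arA _ HA); move/negP; apply.
  exact: submx_trans ftop (submx_trans h2 hh).
have E1 H : H \in A -> exists2 K, K \in C & (f K == H)%MS.
  move=> HA; have LgH := gL _ (L1 _ _ HA).
  have [K2 K2C sK] := Lsub _ _ LgH (gnt _ HA).
  exists K2 => //; have LK2 := L1 _ _ K2C.
  have h1 := (mono _ _ LK2 LgH).1 sK.
  have /andP[fg1 fg2] := fg _ (L1 _ _ HA).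
  have HfK : (H <= f K2)%MS by apply: submx_trans fg2 h1.
  have hm := hyp_max (arA _ HA) HfK (fnt _ LK2 (hyp_not_top (arC _ K2C))).
  by rewrite hm HfK.
pose kc (H : 'M[rat]_n) := nth 0 C (find (fun K => (f K == H)%MS) C).
have kcP H : H \in A -> kc H \in C /\ (f (kc H) == H)%MS.
  move=> HA; have [K KC fK] := E1 _ HA.
  have hs : has (fun K => (f K == H)%MS) C by apply/hasP; exists K.
  by split; [rewrite mem_nth // -has_find | apply: (nth_find 0 hs)].
exists kc; split.
- by move=> H /kcP[].
- move=> K KC; have LK := L1 _ _ KC.
  have [H HA sH] := Lsub _ _ (fL _ LK) (fnt _ LK (hyp_not_top (arC _ KC))).
  exists H => //; have [kC /andP[k1 k2]] := kcP _ HA.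
  have Lk := L1 _ _ kC.
  have s1 : (K <= kc H)%MS by apply/(mono _ _ Lk LK); apply: submx_trans sH k2.
  have LgH := gL _ (L1 _ _ HA).
  by rewrite s1 (hyp_max (arC _ KC) s1 (hyp_not_top (arC _ kC))).
- move=> t H0 tA H0A sub.
  have [k0C /andP[k01 k02]] := kcP _ H0A.
  have Lt : in_lattice C (\bigcap_(H <- map kc t) H)%MS.
    by apply: Lcap => K /mapP[H Ht ->]; case: (kcP _ (tA _ Ht)).
  apply/(mono _ _ (L1 _ _ k0C) Lt); apply: submx_trans k02.
  apply: submx_trans sub; rewrite sub_bigcap_seq; apply/allP => H Ht.
  have [kC /andP[k1 k2]] := kcP _ (tA _ Ht).
  apply: submx_trans k1; apply/(mono _ _ (L1 _ _ kC) Lt).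
  move: (submx_refl (\bigcap_(H <- map kc t) H)%MS); rewrite sub_bigcap_seq => /allP; apply.
  exact: map_f.
- move=> t H0 tA H0A sub.
  have [k0C /andP[k01 k02]] := kcP _ H0A.
  have LX : in_lattice A (\bigcap_(H <- t) H)%MS by apply: Lcap.
  have /andP[fg1 fg2] := fg _ LX.
  have Lt : in_lattice C (\bigcap_(H <- map kc t) H)%MS.
    by apply: Lcap => K /mapP[H Ht ->]; case: (kcP _ (tA _ Ht)).
  apply: submx_trans fg2 _; apply: submx_trans k01.
  apply/(mono _ _ (L1 _ _ k0C) (gL _ LX)); apply: submx_trans sub.
  rewrite sub_bigcap_seq; apply/allP => K /mapP[H Ht ->].
  have [kC /andP[k1 k2]] := kcP _ (tA _ Ht).
  apply/(mono _ _ (L1 _ _ kC) (gL _ LX)); apply: submx_trans fg1 _.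
  apply: submx_trans k2.
  by move: (submx_refl (\bigcap_(H <- t) H)%MS); rewrite sub_bigcap_seq => /allP; apply.
Qed.

Lemma kerP n (u : 'rV[rat]_n) (a : 'cV[rat]_n) :
  (u <= kermx a)%MS = ((u *m a) 0 0 == 0).
Proof.
rewrite sub_kermx; apply/eqP/eqP => [->|h]; first by rewrite mxE.
by apply/matrixP => i j; rewrite !ord1 h mxE.
Qed.

Lemma hypIP n (J : {set 'I_n}) (u : 'rV[rat]_n) :
  (u <= hypI J)%MS = (\sum_(j in J) u 0 j == 0).
Proof.
rewrite kerP mxE; congr (_ == 0); rewrite [RHS]big_mkcond /=; apply: eq_bigr => i _.
by rewrite mxE; case: (i \in J); rewrite ?mulr1 ?mulr0.
Qed.

Lemma rank_col1 n (a : 'cV[rat]_n) : a != 0 -> \rank a = 1%N.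
Proof.
move=> a0; apply/eqP; rewrite eqn_leq rank_leq_col lt0n mxrank_eq0 a0.
done.
Qed.

Lemma rank_hypI n (J : {set 'I_n}) : J != set0 -> \rank (hypI J) = n.-1.
Proof.
move=> J0; rewrite /hypI mxrank_ker rank_col1 ?subn1 //.
case/set0Pn: J0 => j jJ; apply/eqP => /matrixP /(_ j 0); rewrite !mxE jJ.
by move/eqP; rewrite oner_eq0.
Qed.

Lemma hyp_hypI n (J : {set 'I_n}) : J != set0 -> is_hyperplane (hypI J).
Proof.
move=> J0; split; last exact: rank_hypI.
by case/set0Pn: J0 => -[j ji] _; lia.
Qed.

Lemma memA n (e : rel 'I_n) J : J != set0 -> induced_connected e J ->
  hypI J \in conn_subgraph_arr e.
Proof. by move=> J0 cJ; apply: map_f; rewrite mem_enum inE J0 cJ. Qed.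

Lemma memA_inv n (e : rel 'I_n) H : H \in conn_subgraph_arr e ->
  exists2 J, (J != set0) && induced_connected e J & H = hypI J.
Proof. by case/mapP => J; rewrite mem_enum inE => h ->; exists J. Qed.

Lemma arrA n (e : rel 'I_n) : arrangement (conn_subgraph_arr e).
Proof. by move=> H /memA_inv[J /andP[J0 _] ->]; apply: hyp_hypI. Qed.

Lemma conn1 n (e : rel 'I_n) i : induced_connected e [set i].
Proof.
apply/forallP => x; apply/implyP; rewrite inE => /eqP->.
apply/forallP => y; apply/implyP; rewrite inE => /eqP->; exact: connect0.
Qed.

Lemma normal_ex n (K : 'M[rat]_n) : is_hyperplane K ->
  exists a : 'cV[rat]_n, (K == kermx a)%MS.
Proof.
case=> n0 rK; set Z := cokermx K.
have rZ : \rank Z = 1%N by rewrite mxrank_coker rK; lia.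
have : Z != 0 by rewrite -mxrank_eq0 rZ.
move=> Z0; have /existsP[j nj] : [exists j, col j Z != 0].
  apply: contraNT Z0; rewrite negb_exists => /forallP h; apply/eqP/matrixP => i j.
  by have /negPn/eqP/matrixP/(_ i 0) := h j; rewrite !mxE.
exists (col j Z).
have sK : (K <= kermx (col j Z))%MS.
  rewrite sub_kermx; apply/eqP/matrixP => x y; rewrite !mxE.
  transitivity ((K *m cokermx K) x j); last by rewrite mulmx_coker mxE.
  by rewrite !mxE; apply: eq_bigr => k _; rewrite !mxE.
have := mxrank_leqif_eq sK; rewrite mxrank_ker rank_col1 // rK subn1 => le.
by move: (le.2); rewrite eqxx => <-.
Qed.

Lemma hypIT n (u : 'rV[rat]_n) : (u <= hypI setT)%MS = (\sum_j u 0 j == 0).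
Proof. by rewrite hypIP; congr (_ == 0); apply: eq_bigl => j; rewrite inE. Qed.

Lemma hypI1 n i (u : 'rV[rat]_n) : (u <= hypI [set i])%MS = (u 0 i == 0).
Proof. by rewrite hypIP big_set1. Qed.

Definition t1 n (J : {set 'I_n}) := [seq hypI [set i] | i <- enum J].
Definition t2 n (J : {set 'I_n}) := hypI setT :: [seq hypI [set i] | i <- enum (~: J)].
Definition t3 n (i : 'I_n) := [seq hypI [set j] | j <- enum [set j | j != i]].

Lemma A1 n (J : {set 'I_n}) : (\bigcap_(H <- t1 J) H <= hypI J)%MS.
Proof.
apply: submx_rv => u; rewrite sub_bigcap_seq all_map => /allP h.
rewrite hypIP big1 // => i iJ; apply/eqP.
by have := h i; rewrite mem_enum /= hypI1 => /(_ iJ).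
Qed.

Lemma A2 n (J : {set 'I_n}) : (\bigcap_(H <- t2 J) H <= hypI J)%MS.
Proof.
apply: submx_rv => u; rewrite sub_bigcap_seq /= all_map hypIT => /andP[s0 /allP h].
rewrite hypIP; move: s0; rewrite (bigID (mem J)) /= [X in _ + X]big1 ?addr0 //.
move=> i iJ; apply/eqP.
by have := h i; rewrite mem_enum inE /= hypI1 => /(_ iJ).
Qed.

Lemma A3 n (i : 'I_n) : ((delta_mx 0 i : 'rV[rat]_n) <= \bigcap_(H <- t3 i) H)%MS.
Proof.
rewrite sub_bigcap_seq all_map; apply/allP => j; rewrite mem_enum inE /= hypI1 mxE.
by move/negbTE ->; rewrite andbF.
Qed.

Lemma A3' n (i : 'I_n) : ~~ (\bigcap_(H <- t3 i) H <= hypI [set i])%MS.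
Proof.
apply/negP => h; have := submx_trans (A3 i) h.
by rewrite hypI1 mxE !eqxx oner_eq0.
Qed.

Lemma A4' n (i : 'I_n) : ~~ (\bigcap_(H <- t3 i) H <= hypI setT)%MS.
Proof.
apply/negP => h; have := submx_trans (A3 i) h.
rewrite hypIT (bigD1 i) //= big1 ?mxE ?eqxx ?addr0 ?oner_eq0 // => j ji.
by rewrite mxE (negbTE ji) andbF.
Qed.

Theorem mainTheorem1 (n : nat) (e : rel 'I_n) :
  simple_graph e -> graph_connected e ->
  forall C : seq 'M[rat]_n, arrangement C ->
    lattice_iso C (conn_subgraph_arr e) ->
    exists2 phi : 'M[rat]_n, phi \in unitmx & image_arr phi (conn_subgraph_arr e) C.
Proof.
move=> _ gc C arC iso.
have [n0|n0] : (n = 0)%N \/ (0 < n)%N by lia.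
  exists 1%:M; first exact: unitmx1.
  split.
    by move=> H /arC [h _]; exfalso; move: h; rewrite n0.
  by move=> H /memA_inv[J /andP[/set0Pn[[j jn] _] _] _]; lia.
have [kc [kcC kcS K1 K2]] := lattice_facts arC (@arrA _ e) iso.
set A := conn_subgraph_arr e in kcC kcS K1 K2 *.
pose H1 (i : 'I_n) := hypI [set i].
have H1A i : H1 i \in A.
  by apply: memA (conn1 e i); apply/set0Pn; exists i; rewrite inE.
have HNA : hypI setT \in A.
  by apply: memA gc; apply/set0Pn; exists (Ordinal n0).
have t1A J : {subset t1 J <= A} by move=> H /mapP[i _ ->]; apply: H1A.
have t2A J : {subset t2 J <= A} by move=> H; rewrite inE => /orP[/eqP->|/mapP[i _ ->]] //; apply: H1A.
have t3A i : {subset t3 i <= A} by move=> H /mapP[j _ ->]; apply: H1A.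
have subE (X Y : 'M[rat]_n) (u : 'rV[rat]_n) : (X == Y)%MS -> (u <= X)%MS = (u <= Y)%MS.
  by case/andP => XY YX; apply/idP/idP => h; [apply: submx_trans XY | apply: submx_trans YX].
have nrm i : exists a : 'cV[rat]_n, (kc (H1 i) == kermx a)%MS.
  exact: normal_ex (arC _ (kcC _ (H1A i))).
pose a i := xchoose (nrm i).
have aP i : (kc (H1 i) == kermx (a i))%MS := xchooseP (nrm i).
have [b bP] := normal_ex (arC _ (kcC _ HNA)).
pose Ma := \matrix_(r, j) a j r 0.
have uMa (u : 'rV[rat]_n) j : (u *m Ma) 0 j = (u *m a j) 0 0.
  by rewrite !mxE; apply: eq_bigr => k _; rewrite mxE.
have subK1 (u : 'rV[rat]_n) i : (u <= kc (H1 i))%MS = ((u *m a i) 0 0 == 0) by rewrite (subE _ _ u (aP i)) kerP.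
have capK (P : pred 'I_n) (u : 'rV[rat]_n) : (forall i, P i -> (u *m a i) 0 0 = 0) ->
    (u <= \bigcap_(H <- map kc [seq H1 i | i <- enum P]) H)%MS.
  move=> h; rewrite sub_bigcap_seq -map_comp all_map; apply/allP => i.
  by rewrite mem_enum /preim /comp /= subK1 => /h ->.
have MaU : Ma \in unitmx.
  case: (boolP (Ma \in unitmx)) => // nU; exfalso.
  have : kermx Ma^T != 0.
    rewrite -mxrank_eq0 mxrank_ker mxrank_tr.
    move: nU; rewrite -row_free_unit /row_free => h.
    have := rank_leq_row Ma; move: h; rewrite -subn_eq0; lia.
  case/rowV0Pn => y yk y0.
  have [i yi] : exists i, y 0 i != 0.
    apply/existsP; apply: contraNT y0; rewrite negb_exists => /forallP h.
    by apply/eqP/matrixP => p q; rewrite !ord1 mxE; apply/eqP/negPn/h.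
  have ey (u : 'rV[rat]_n) : \sum_j (u *m a j) 0 0 * y 0 j = 0.
    have : (u *m Ma) *m y^T = 0.
      by rewrite -mulmxA -[Ma]trmxK -trmx_mul (sub_kermxP yk) trmx0 mulmx0.
    move/matrixP/(_ 0 0); rewrite [X in X = _ -> _]mxE mxE => h; rewrite -[RHS]h; apply: eq_bigr => j _.
    by rewrite uMa [y^T _ _]mxE.
  have : (\bigcap_(H <- map kc (t3 i)) H <= kc (H1 i))%MS.
    apply: submx_rv => u; rewrite subK1 sub_bigcap_seq -map_comp all_map => /allP h.
    have := ey u; rewrite (bigD1 i) //= big1 ?addr0.
      by move/eqP; rewrite mulf_eq0 (negbTE yi) orbF.
    move=> j ji; have := h j; rewrite mem_enum inE ji /= subK1 => /(_ isT) /eqP ->.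
    by rewrite mul0r.
  by move/(K2 _ _ (t3A i) (H1A i)); apply/negP; apply: A3'.
pose c := invmx Ma *m b.
have bc : b = Ma *m c by rewrite mulKVmx.
have ub (u : 'rV[rat]_n) : (u *m b) 0 0 = \sum_j (u *m a j) 0 0 * c j 0.
  by rewrite bc mulmxA mxE; apply: eq_bigr => j _; rewrite uMa.
have c0 i : c i 0 != 0.
  apply/negP => /eqP ci.
  have : (\bigcap_(H <- map kc (t3 i)) H <= kc (hypI setT))%MS.
    apply: submx_rv => u; rewrite (subE _ _ _ bP) kerP ub sub_bigcap_seq -map_comp all_map => /allP h.
    rewrite (bigD1 i) //= ci mulr0 add0r big1 // => j ji.
    have := h j; rewrite mem_enum inE ji /= subK1 => /(_ isT) /eqP ->.
    by rewrite mul0r.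
  by move/(K2 _ _ (t3A i) HNA); apply/negP; apply: A4'.
pose M := Ma *m diag_mx c^T.
have uM (u : 'rV[rat]_n) j : (u *m M) 0 j = (u *m a j) 0 0 * c j 0.
  by rewrite mulmxA mul_mx_diag [LHS]mxE uMa [c^T _ _]mxE.
have MU : M \in unitmx.
  rewrite unitmx_mul MaU unitmxE det_diag unitfE; apply/prodf_neq0 => i _.
  by rewrite mxE.
have wE (v : 'rV[rat]_n) j : (v *m invmx M *m a j) 0 0 * c j 0 = v 0 j.
  by rewrite -uM mulmxKV.
have w1 (v : 'rV[rat]_n) i : (v *m invmx M <= kc (H1 i))%MS = (v 0 i == 0).
  by rewrite subK1 -wE mulf_eq0 (negbTE (c0 i)) orbF.
have wN (v : 'rV[rat]_n) : (v *m invmx M <= kc (hypI setT))%MS = (\sum_j v 0 j == 0).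
  rewrite (subE _ _ _ bP) kerP ub; congr (_ == 0); apply: eq_bigr => j _; exact: wE.
have fin J : J \in [set J | (J != set0) && induced_connected e J] ->
    (kc (hypI J) == hypI J *m invmx M)%MS.
  rewrite inE => /andP[J0 cJ]; have HJ := memA J0 cJ.
  have sub : (hypI J *m invmx M <= kc (hypI J))%MS.
    apply/row_subP => r; rewrite row_mul.
    set u := row r (hypI J).
    have : (u <= hypI J)%MS by apply: row_sub.
    rewrite hypIP => /eqP hu.
    pose v := \row_j (if j \in J then 0 else u 0 j).
    pose z := \row_j (if j \in J then u 0 j else 0).
    have uvz : u = v + z.
      by apply/matrixP => p q; rewrite !ord1 !mxE; case: (q \in J); rewrite ?addr0 ?add0r.
    rewrite uvz mulmxDl addmx_sub //.
      apply: submx_trans (K1 _ _ (t1A J) HJ (A1 J)).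
      rewrite /t1 -map_comp sub_bigcap_seq all_map; apply/allP => i.
      by rewrite mem_enum /= w1 mxE => ->.
    apply: submx_trans (K1 _ _ (t2A J) HJ (A2 J)).
    rewrite /t2 /= sub_bigcap_seq /= wN -map_comp all_map; apply/andP; split.
      by apply/eqP; rewrite -[RHS]hu [RHS]big_mkcond /=; apply: eq_bigr => j _; rewrite mxE.
    apply/allP => i; rewrite mem_enum inE /= w1 mxE => /negbTE -> //.
  have := mxrank_leqif_eq sub.
  rewrite mxrankMfree ?row_free_unit ?unitmx_inv // rank_hypI //.
  have [_ ->] := arC _ (kcC _ HJ); move=> le.
  by move: (le.2); rewrite eqxx andbC => <-.
exists (invmx M); first by rewrite unitmx_inv.
split.
  move=> K KC; have [H HA KH] := kcS _ KC.
  have [J JA HJ] := memA_inv HA; exists H => //.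
  have := fin J; rewrite inE JA -HJ => /(_ isT) /andP[s1 s2].
  case/andP: KH => k1 k2.
  by rewrite (submx_trans k1 s1) (submx_trans s2 k2).
move=> H HA; have [J JA HJ] := memA_inv HA.
exists (kc H); first exact: kcC.
by have := fin J; rewrite inE JA -HJ => /(_ isT).
Qed.
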